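(* Let $K$ be an increasing sequence of positive integers such that $\{\mathfrak F^{-1}(K_n)\}$ is equidistributed. Then $K$ satisfies strong Benford's Law under $\mathcal F$-expansion, i.e. for every integer $s\ge2$ and $\mathbf b\in\mathcal F_s$, $$\lim_{n\to\infty}\frac{\#\{k\le n:\mathrm{LB}_s(K_k)=\mathbf b\}}{n}=\log_\phi\frac{\widetilde{\mathbf b}\cdot\widehat F}{\mathbf b\cdot\widehat F}.$$
   Context: $F$: $F_1=1,F_2=2,F_{n+2}=F_{n+1}+F_n$. Zeckendorf expansion $m=\sum_{k=1}^M\epsilon(k)F_{M-k+1}$ (unique, $\epsilon(k)\in\{0,1\}$, $\epsilon(1)=1$, $\epsilon(k)\epsilon(k+1)=0$); $\mathrm{LB}_s(m)=(\epsilon(1),\dots,\epsilon(s))$ if $M\ge s$. $\mathcal F_s$ ($s\ge2$): all $\mathrm{LB}_s(m)$, listed $\mathbf b_1,\dots,\mathbf b_\ell$ with $1+\mathbf b_k*F=\mathbf b_{k+1}*F$ where $\mathbf b*F=\sum_{k}\mathbf b(k)F_{s-k+1}$; $\mathbf b_{\ell+1}:=(1,0,1,0,\dots,1,0,1,1)$ if $s$ even, $(1,0,1,0,\dots,1,1,0)$ if $s$ odd; $\widetilde{\mathbf b_k}=\mathbf b_{k+1}$. $\omega=\phi^{-1}$ ($\phi$ golden ratio), $\mathbf b\cdot\widehat F=\sum_k\mathbf b(k)\omega^{k-1}$. $\mathfrak F(x)=\frac{\phi}{\sqrt5}(\phi^x+\phi^{-x}\cos(\pi x)\phi^{-2})$,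 increasing on $[1,\infty)$, inverse $\mathfrak F^{-1}$. A real sequence $(x_n)$ has $\{x_n\}$ equidistributed if $\lim_n\#\{k\le n:\{x_k\}\le\beta\}/n=\beta$ for all $\beta\in[0,1]$, $\{\cdot\}$ denoting fractional part. *)

(* Defs.v *)
From Stdlib Require Import Reals Lra List ClassicalDescription ClassicalEpsilon.
From Coquelicot Require Import Coquelicot.
Import ListNotations.
Open Scope R_scope.

(* F_1 = 1, F_2 = 2, F_{n+2} = F_{n+1} + F_n ; fibS k = F_{k+1} *)
Fixpoint fibS (k : nat) : nat :=
  match k with
  | O => 1%nat
  | S O => 2%nat
  | S ((S k') as k1) => (fibS k1 + fibS k')%nat
  end.

Definition F (n : nat) : nat := fibS (Nat.pred n).

(* b * F = sum_{k=1}^{s} b(k) F_{s-k+1}, where s = length b and b(1) is the head *)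
Fixpoint valF (b : list bool) : nat :=
  match b with
  | [] => 0%nat
  | x :: t => ((if x then F (S (length t)) else 0%nat) + valF t)%nat
  end.

Fixpoint no_adj (l : list bool) : Prop :=
  match l with
  | x :: ((y :: _) as t) => ~ (x = true /\ y = true) /\ no_adj t
  | _ => True
  end.

Definition is_zeck (m : nat) (eps : list bool) : Prop :=
  hd false eps = true /\ no_adj eps /\ valF eps = m.

Definition LB_is (s m : nat) (b : list bool) : Prop :=
  exists eps, is_zeck m eps /\ (s <= length eps)%nat /\ firstn s eps = b.

Definition inFs (s : nat) (b : list bool) : Prop := exists m, LB_is s m b.

Definition last_block (s : nat) : list bool :=
  concat (repeat [true; false] (Nat.div2 s - 1)) ++
  (if Nat.even s then [true; true] else [true; true; false]).

Definition is_tilde (s : nat) (b c : list bool) : Prop :=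
  (inFs s c /\ valF c = S (valF b)) \/
  ((forall c', inFs s c' -> valF c' <> S (valF b)) /\ c = last_block s).

Definition phi : R := (1 + sqrt 5) / 2.
Definition omega : R := / phi.

(* b . \hat F = sum_k b(k) omega^(k-1) *)
Fixpoint dotw_from (i : nat) (b : list bool) : R :=
  match b with
  | [] => 0
  | x :: t => (if x then omega ^ i else 0) + dotw_from (S i) t
  end.
Definition dotw (b : list bool) : R := dotw_from 0 b.

Definition log_phi (y : R) : R := ln y / ln phi.

Definition FF (x : R) : R :=
  phi / sqrt 5 * (Rpower phi x + Rpower phi (- x) * cos (PI * x) * Rpower phi (-2)).

Definition FFinv (y : R) : R :=
  epsilon (inhabits 1) (fun x => 1 <= x /\ FF x = y).

Fixpoint count_upto (P : nat -> Prop) (n : nat) : nat :=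
  match n with
  | O => O
  | S n' => ((if excluded_middle_informative (P n) then 1 else 0) + count_upto P n')%nat
  end.

Definition equidistributed (x : nat -> R) : Prop :=
  forall beta, 0 <= beta <= 1 ->
    is_lim_seq (fun n => INR (count_upto (fun k => frac_part (x k) <= beta) n) / INR n) beta.

(* Main.v *)
Require Import Defs.
From Stdlib Require Import Reals List.
From Coquelicot Require Import Coquelicot.
From Stdlib Require Import Lra Lia ZArith ClassicalEpsilon.
Import ListNotations.
Open Scope R_scope.


Lemma F_rec n : F (S (S n)) = (F (S n) + F n)%nat.
Proof. destruct n; reflexivity. Qed.

Lemma F_pos n : (1 <= F n)%nat.
Proof.
  induction n as [n IH] using (well_founded_induction Wf_nat.lt_wf).
  destruct n as [|[|n]]; try (unfold F; simpl; lia).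
  rewrite F_rec. specialize (IH n). lia.
Qed.

Lemma F_mono n : (F n <= F (S n))%nat.
Proof. destruct n. unfold F; simpl; lia. rewrite F_rec. lia. Qed.

Lemma F_mono_le n m : (n <= m)%nat -> (F n <= F m)%nat.
Proof. induction 1. lia. pose proof (F_mono m). lia. Qed.

Lemma F_smono n : (F (S n) < F (S (S n)))%nat.
Proof. rewrite F_rec. pose proof (F_pos n). lia. Qed.

Lemma F_smono_lt n m : (1 <= n)%nat -> (n < m)%nat -> (F n < F m)%nat.
Proof.
  intros H1 H. induction H.
  - destruct n. lia. apply F_smono.
  - pose proof (F_mono m). lia.
Qed.

Lemma no_adj_tl a l : no_adj (a :: l) -> no_adj l.
Proof. destruct l; simpl; tauto. Qed.

Lemma no_adj_app_l x t : no_adj (x ++ t) -> no_adj x.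
Proof.
  induction x as [|a x IH]; simpl; auto.
  destruct x as [|a' x]; simpl; auto.
  intros [H1 H2]. split; auto. apply IH. exact H2.
Qed.

Lemma no_adj_cons_false l : no_adj l -> no_adj (false :: l).
Proof. destruct l; simpl; auto. intros H; split; auto. intros [Hf _]; discriminate. Qed.

Lemma no_adj_cons_true_false l : no_adj (false :: l) -> no_adj (true :: false :: l).
Proof. intros H. simpl. split; auto. intros [_ Hf]; discriminate. Qed.

Lemma no_adj_zeros r : no_adj (repeat false r).
Proof. induction r; simpl; auto. apply no_adj_cons_false; auto. Qed.

Lemma no_adj_app_zeros x r : no_adj x -> no_adj (x ++ repeat false r).
Proof.
  induction x as [|a x IH]; intros H. apply no_adj_zeros.
  destruct x as [|a' x].
  - destruct r. simpl; auto. change (no_adj (a :: false :: repeat false r)). destruct a.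
    apply no_adj_cons_true_false. apply no_adj_cons_false, no_adj_zeros.
    apply no_adj_cons_false. apply no_adj_cons_false, no_adj_zeros.
  - destruct H as [H1 H2]. simpl. split; auto. apply IH; exact H2.
Qed.

Lemma F0 : F 0 = 1%nat. Proof. reflexivity. Qed.
Lemma F1 : F 1 = 1%nat. Proof. reflexivity. Qed.
Lemma F2 : F 2 = 2%nat. Proof. reflexivity. Qed.
Lemma valF_nil : valF [] = 0%nat. Proof. reflexivity. Qed.
Lemma valF_t t : valF (true :: t) = (F (S (length t)) + valF t)%nat. Proof. reflexivity. Qed.
Lemma valF_f t : valF (false :: t) = valF t. Proof. reflexivity. Qed.

Lemma valF_bound t : no_adj t -> (valF t < F (S (length t)))%nat.
Proof.
  induction t as [t IH] using (well_founded_induction (Wf_nat.well_founded_ltof _ (@length bool))); unfold Wf_nat.ltof in IH.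
  destruct t as [|a t]; intros H. cbn [length]. rewrite valF_nil, F1; lia.
  destruct a.
  - destruct t as [|a' t']. rewrite valF_t, valF_nil. cbn [length]. rewrite F1, F2. lia.
    destruct a'. simpl in H. tauto.
    destruct H as [_ H].
    assert (H' : no_adj t') by (apply (no_adj_tl _ _ H)).
    specialize (IH t' ltac:(simpl; lia) H'). rewrite valF_t, valF_f. simpl length.
    rewrite (F_rec (S (length t'))). lia.
  - specialize (IH t ltac:(simpl; lia) (no_adj_tl _ _ H)).
    rewrite valF_f. simpl length.
    pose proof (F_mono (S (length t))). lia.
Qed.

Lemma valF_zeros r : valF (repeat false r) = 0%nat.
Proof. induction r; simpl; auto. Qed.

Lemma valF_app x y : valF (x ++ y) = (valF (x ++ repeat false (length y)) + valF y)%nat.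
Proof.
  induction x as [|a x IH]; simpl. rewrite valF_zeros; lia.
  rewrite !length_app, repeat_length. rewrite IH. lia.
Qed.

Lemma valF_head_true t : (F (S (length t)) <= valF (true :: t))%nat.
Proof. simpl. lia. Qed.

Lemma cmpA x y t u : length x = length y -> length t = length u ->
  no_adj (x ++ t) -> no_adj (y ++ u) -> (valF x < valF y)%nat ->
  (valF (x ++ t) < valF (y ++ u))%nat.
Proof.
  revert y. induction x as [|a x IH]; intros [|c y] Hl Ht Hx Hy Hv;
    try (simpl in Hl; lia); try (rewrite valF_nil in Hv; lia).
  simpl in Hl. injection Hl as Hl.
  change ((a::x)++t) with (a :: (x++t)) in *.
  change ((c::y)++u) with (c :: (y++u)) in *.
  pose proof (no_adj_tl _ _ Hx) as Hx'. pose proof (no_adj_tl _ _ Hy) as Hy'.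
  destruct a, c; rewrite ?valF_t, ?valF_f in *.
  - assert (valF x < valF y)%nat by (rewrite Hl in Hv; lia).
    specialize (IH y Hl Ht Hx' Hy' H).
    rewrite !length_app. rewrite Hl, Ht. lia.
  - exfalso. pose proof (valF_bound y (no_adj_app_l _ _ Hy')). rewrite Hl in Hv. lia.
  - pose proof (valF_bound (x ++ t) Hx').
    rewrite !length_app in *. rewrite Hl, Ht in *. lia.
  - apply IH; auto.
Qed.

Lemma cmpC x y : length x = length y -> no_adj x -> no_adj y -> valF x = valF y -> x = y.
Proof.
  revert y. induction x as [|a x IH]; intros [|c y] Hl Hx Hy Hv;
    try (simpl in Hl; lia); auto.
  simpl in Hl. injection Hl as Hl.
  pose proof (no_adj_tl _ _ Hx) as Hx'. pose proof (no_adj_tl _ _ Hy) as Hy'.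
  destruct a, c; rewrite ?valF_t, ?valF_f in *.
  - f_equal. apply IH; auto. rewrite Hl in Hv; lia.
  - exfalso. pose proof (valF_bound y Hy'). rewrite Hl in Hv; lia.
  - exfalso. pose proof (valF_bound x Hx'). rewrite <- Hl in Hv; lia.
  - f_equal. apply IH; auto.
Qed.

Lemma existsE L : forall m, (m < F (S L))%nat -> exists t, length t = L /\ no_adj t /\ valF t = m
   /\ ((F L <= m)%nat -> hd false t = true).
Proof.
  induction L as [L IH] using (well_founded_induction Wf_nat.lt_wf). intros m Hm.
  destruct L as [|L].
  - exists []. rewrite F1 in Hm. rewrite F0. split; [reflexivity|]. split; [exact I|].
    rewrite valF_nil. split; lia.
  - destruct (Nat.lt_ge_cases m (F (S L))) as [Hlt|Hge].
    + destruct (IH L ltac:(lia) m Hlt) as [t [H1 [H2 [H3 _]]]].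
      exists (false :: t). split; [simpl; lia|]. split; [apply no_adj_cons_false; auto|].
      rewrite valF_f. split; auto. intros. lia.
    + destruct L as [|L].
      * exists [true]. rewrite F2 in Hm. rewrite F1 in Hge.
        split; [reflexivity|]. split; [exact I|]. rewrite valF_t, valF_nil. cbn [length]. rewrite F1.
        split; [lia|]. reflexivity.
      * rewrite F_rec in Hm.
        destruct (IH L ltac:(lia) (m - F (S (S L)))%nat ltac:(lia)) as [t [H1 [H2 [H3 _]]]].
        exists (true :: false :: t). split; [simpl; lia|].
        split. apply no_adj_cons_true_false, no_adj_cons_false; auto.
        rewrite valF_t, valF_f. cbn [length]. rewrite H1, H3. split; [lia|]. reflexivity.
Qed.

Lemma zeck_len_exists m : (1 <= m)%nat -> exists M, (1 <= M)%nat /\ (F M <= m < F (S M))%nat.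
Proof.
  induction m; intros H. lia.
  destruct m. exists 1%nat. rewrite F1, F2. lia.
  destruct (IHm ltac:(lia)) as [M [HM1 HM2]].
  destruct (Nat.lt_ge_cases (S (S m)) (F (S M))).
  - exists M. lia.
  - exists (S M). split. lia. rewrite F_rec. pose proof (F_pos M). lia.
Qed.

Lemma zeck_exists m : (1 <= m)%nat -> exists eps, is_zeck m eps.
Proof.
  intros H. destruct (zeck_len_exists m H) as [M [HM1 HM2]].
  destruct (existsE M m ltac:(lia)) as [t [H1 [H2 [H3 H4]]]].
  exists t. repeat split; auto. apply H4; lia.
Qed.

Lemma zeck_bounds m eps : is_zeck m eps ->
  (F (length eps) <= m < F (S (length eps)))%nat.
Proof.
  intros [Hh [Hn Hv]]. subst m. split.
  - destruct eps as [|a t]; simpl in Hh; try discriminate. subst a.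
    apply valF_head_true.
  - apply valF_bound; auto.
Qed.


Definition Pv (c : list bool) (r : nat) : nat := valF (c ++ repeat false r).

Lemma LB_props s m b : (1 <= s)%nat -> LB_is s m b ->
  length b = s /\ no_adj b /\ hd false b = true.
Proof.
  intros Hs [eps [[Hh [Hn Hv]] [Hl Hf]]]. subst b.
  split. rewrite length_firstn. lia.
  split. rewrite <- (firstn_skipn s eps) in Hn. eapply no_adj_app_l; eauto.
  destruct eps. simpl in Hl; lia. destruct s. lia. simpl. exact Hh.
Qed.

Lemma inFs_props s b : (1 <= s)%nat -> inFs s b ->
  length b = s /\ no_adj b /\ hd false b = true.
Proof. intros Hs [m H]. eapply LB_props; eauto. Qed.

Lemma len_cr j : length (concat (repeat [true; false] j)) = (2 * j)%nat.
Proof. induction j. reflexivity. cbn [repeat concat]. rewrite length_app, IHj. simpl. lia. Qed.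

Lemma lb_aux j r : valF (concat (repeat [true; false] j) ++ [true; true] ++ repeat false r)
   = F (S (2 * j + 2 + r)).
Proof.
  induction j.
  - simpl concat. rewrite app_nil_l. change ([true; true] ++ repeat false r) with (true :: true :: repeat false r).
    rewrite !valF_t, valF_zeros. cbn [length]. rewrite repeat_length.
    replace (S (2 * 0 + 2 + r)) with (S (S (S r))) by lia. rewrite (F_rec (S r)). lia.
  - cbn [repeat concat]. change (([true; false] ++ concat (repeat [true; false] j)) ++ [true; true] ++ repeat false r)
      with (true :: false :: (concat (repeat [true; false] j) ++ [true; true] ++ repeat false r)).
    rewrite valF_t, valF_f, IHj. cbn [length]. rewrite !length_app, repeat_length.
    rewrite len_cr. cbn [length].
    replace (S (2 * S j + 2 + r)) with (S (S (S (2 * j + 2 + r)))) by lia.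
    rewrite (F_rec (S (2 * j + 2 + r))). 
    replace (S (2 * j + (2 + r))) with (S (2 * j + 2 + r)) by lia. lia.
Qed.

Lemma last_block_props s r : (2 <= s)%nat ->
  length (last_block s) = s /\ hd false (last_block s) = true /\
  Pv (last_block s) r = F (S (s + r)).
Proof.
  intros Hs. unfold last_block, Pv.
  pose proof len_cr as Hl.
  pose proof (Nat.div2_odd s) as Hd.
  destruct (Nat.even s) eqn:He.
  - assert (Ho : Nat.odd s = false) by (rewrite <- Nat.negb_even, He; reflexivity).
    rewrite Ho in Hd. simpl Nat.b2n in Hd.
    split. rewrite length_app, Hl. simpl length. lia.
    split. destruct (Nat.div2 s - 1)%nat eqn:E; reflexivity.
    rewrite <- app_assoc, lb_aux. f_equal. lia.
  - assert (Ho : Nat.odd s = true) by (rewrite <- Nat.negb_even, He; reflexivity).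
    rewrite Ho in Hd. simpl Nat.b2n in Hd.
    split. rewrite length_app, Hl. simpl length. lia.
    split. destruct (Nat.div2 s - 1)%nat eqn:E; reflexivity.
    rewrite <- app_assoc.
    change ([true; true; false] ++ repeat false r) with ([true; true] ++ repeat false (S r)).
    rewrite lb_aux. f_equal. lia.
Qed.

Lemma Pv_lt_F c r : no_adj c -> (Pv c r < F (S (length c + r)))%nat.
Proof.
  intros H. unfold Pv. pose proof (valF_bound _ (no_adj_app_zeros c r H)).
  rewrite length_app, repeat_length in H0. exact H0.
Qed.

Lemma Pv_ge_F c r : hd false c = true -> (F (length c + r) <= Pv c r)%nat.
Proof.
  intros H. destruct c as [|a c]; simpl in H; try discriminate. subst a.
  unfold Pv. change ((true :: c) ++ repeat false r) with (true :: (c ++ repeat false r)).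
  rewrite valF_t, length_app, repeat_length. cbn [length]. rewrite Nat.add_succ_l. lia.
Qed.

Lemma Pv_bt_le s b bt r : (2 <= s)%nat -> inFs s b -> is_tilde s b bt ->
  length bt = s /\ hd false bt = true /\ (Pv bt r <= F (S (s + r)))%nat.
Proof.
  intros Hs Hb [[Hc Hv]|[Hn Hc]].
  - destruct (inFs_props s bt ltac:(lia) Hc) as [H1 [H2 H3]].
    split; auto. split; auto. pose proof (Pv_lt_F bt r H2). rewrite H1 in H. lia.
  - subst bt. destruct (last_block_props s r Hs) as [H1 [H2 H3]]. split; auto. split; auto. lia.
Qed.

Lemma LB_fwd s b bt m : (2 <= s)%nat -> inFs s b -> is_tilde s b bt -> LB_is s m b ->
  exists r, (Pv b r <= m < Pv bt r)%nat.
Proof.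
  intros Hs Hb Ht HL.
  destruct (inFs_props s b ltac:(lia) Hb) as [Hbl [Hbn Hbh]].
  destruct HL as [eps [[Hh [Hn Hv]] [Hl Hf]]].
  set (rest := skipn s eps).
  assert (He : eps = b ++ rest) by (subst b rest; symmetry; apply firstn_skipn).
  assert (Hr : length rest = (length eps - s)%nat) by (subst rest; apply length_skipn).
  exists (length eps - s)%nat.
  rewrite He in Hv. rewrite valF_app in Hv. rewrite Hr in Hv.
  split. unfold Pv. lia.
  destruct Ht as [[Hc Hv2]|[Hn2 Hc]].
  - destruct (inFs_props s bt ltac:(lia) Hc) as [H1 [H2 H3]].
    rewrite <- Hv. replace (length eps - s)%nat with (length rest) by lia. rewrite <- valF_app. unfold Pv.
    apply cmpA. congruence. rewrite repeat_length; auto. rewrite <- He; auto.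
    apply no_adj_app_zeros; auto. lia.
  - subst bt. destruct (last_block_props s (length eps - s) Hs) as [H1 [H2 H3]].
    rewrite H3. pose proof (valF_bound eps Hn).
    replace (s + (length eps - s))%nat with (length eps) by lia.
    rewrite He in H at 1. rewrite valF_app, Hr in H. lia.
Qed.

Lemma LB_bwd s b bt m r : (2 <= s)%nat -> inFs s b -> is_tilde s b bt ->
  (Pv b r <= m < Pv bt r)%nat -> LB_is s m b.
Proof.
  intros Hs Hb Ht [Hm1 Hm2].
  destruct (inFs_props s b ltac:(lia) Hb) as [Hbl [Hbn Hbh]].
  destruct (Pv_bt_le s b bt r Hs Hb Ht) as [Htl [Hth HtF]].
  pose proof (Pv_ge_F b r Hbh) as HbF. rewrite Hbl in HbF.
  pose proof (F_pos (s + r)).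
  destruct (zeck_exists m ltac:(lia)) as [eps Hz].
  pose proof (zeck_bounds m eps Hz) as [Hz1 Hz2].
  assert (Hlen : length eps = (s + r)%nat).
  { destruct (Nat.lt_trichotomy (length eps) (s + r)) as [Hlt|[Heq|Hgt]]; auto.
    - pose proof (F_mono_le (S (length eps)) (s + r) Hlt). lia.
    - pose proof (F_mono_le (S (s + r)) (length eps) Hgt). lia. }
  destruct Hz as [Hh [Hn Hv]].
  set (p := firstn s eps). set (rest := skipn s eps).
  assert (He : eps = p ++ rest) by (subst p rest; symmetry; apply firstn_skipn).
  assert (Hr : length rest = r) by (subst rest; rewrite length_skipn; lia).
  assert (Hpl : length p = s) by (subst p; rewrite length_firstn; lia).
  assert (HpF : inFs s p).
  { exists m. exists eps. split. split; auto. split; [lia| reflexivity]. }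
  destruct (inFs_props s p ltac:(lia) HpF) as [_ [Hpn Hph]].
  assert (Hnr : no_adj (p ++ rest)) by (rewrite <- He; auto).
  destruct (Nat.lt_trichotomy (valF p) (valF b)) as [Hlt|[Heq|Hgt]].
  - exfalso. pose proof (cmpA p b rest (repeat false r) ltac:(congruence)
      ltac:(rewrite repeat_length; auto) Hnr (no_adj_app_zeros b r Hbn) Hlt).
    rewrite <- He, Hv in H0. unfold Pv in Hm1. lia.
  - assert (p = b) by (apply cmpC; auto; congruence).
    exists eps. split. split; auto. split. lia. fold p. auto.
  - exfalso. destruct Ht as [[Hc Hv2]|[Hn2 Hc]].
    + destruct (inFs_props s bt ltac:(lia) Hc) as [H1 [H2 H3]].
      destruct (Nat.eq_dec (valF p) (valF bt)) as [E|E].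
      * assert (Hpb : p = bt) by (apply cmpC; auto; congruence).
        assert (Hq : valF eps = valF (bt ++ rest)) by (rewrite He, Hpb; reflexivity). rewrite valF_app, Hr in Hq. unfold Pv in Hm2. lia.
      * assert (Hlt2 : (valF bt < valF p)%nat) by lia.
        pose proof (cmpA bt p (repeat false r) rest ltac:(congruence)
          ltac:(rewrite repeat_length; auto) (no_adj_app_zeros bt r H2) Hnr Hlt2) as Hc2.
        rewrite <- He, Hv in Hc2. unfold Pv in Hm2. lia.
    + destruct (Nat.eq_dec (valF p) (S (valF b))) as [E|E].
      * apply (Hn2 p HpF E).
      * pose proof (valF_bound p Hpn) as Hpb. rewrite Hpl in Hpb.
        assert (Hbs : (F s <= valF b)%nat).
        { destruct b as [|a b']. simpl in Hbh; discriminate. simpl in Hbh. subst a.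
          rewrite valF_t. simpl in Hbl. rewrite <- Hbl. lia. }
        destruct (existsE s (S (valF b)) ltac:(lia)) as [t [T1 [T2 [T3 T4]]]].
        apply (Hn2 t).
        { exists (S (valF b)). exists t. split. { split. apply T4; lia. split; auto. }
          split. lia. rewrite <- T1. apply firstn_all. }
        exact T3.
Qed.


Definition r5 := sqrt 5.
Definition c0 := phi / r5.

Lemma r5_sq : r5 * r5 = 5.
Proof. unfold r5. apply sqrt_sqrt. lra. Qed.

Lemma r5_bounds : 2 < r5 < 3.
Proof.
  pose proof r5_sq. assert (0 <= r5) by (unfold r5; apply sqrt_pos). nra.
Qed.

Lemma phi_eq : phi = (1 + r5) / 2.
Proof. reflexivity. Qed.

Lemma phi_gt1 : 1 < phi.
Proof. rewrite phi_eq. pose proof r5_bounds. lra. Qed.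

Lemma phi_sq : phi * phi = phi + 1.
Proof. rewrite phi_eq. pose proof r5_sq. nra. Qed.

Lemma omega_eq : omega = phi - 1.
Proof. unfold omega. pose proof phi_gt1. pose proof phi_sq. field_simplify_eq; nra. Qed.

Lemma omega_phi : omega * phi = 1.
Proof. unfold omega. pose proof phi_gt1. field. lra. Qed.

Lemma c0_pos : 0 < c0.
Proof. unfold c0. pose proof phi_gt1. pose proof r5_bounds. apply Rdiv_lt_0_compat; lra. Qed.

Lemma c0_le1 : c0 <= 1.
Proof.
  unfold c0. rewrite phi_eq. pose proof r5_bounds.
  apply Rmult_le_reg_r with r5. lra. unfold Rdiv. rewrite Rmult_assoc, Rinv_l by lra. lra.
Qed.

Lemma binet n : INR (F n) = c0 * (phi ^ n + (-1) ^ n / phi ^ (n + 2)).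
Proof.
  pose proof phi_gt1 as Hp. pose proof phi_sq as Hs. pose proof r5_sq. pose proof r5_bounds.
  assert (Hr : c0 = phi / r5) by reflexivity.
  assert (Hr5 : r5 = 2 * phi - 1) by (rewrite phi_eq; lra).
  induction n as [n IH] using (well_founded_induction Wf_nat.lt_wf).
  destruct n as [|[|n]].
  - rewrite F0. simpl. rewrite Hr. field_simplify_eq; try lra. nra.
  - rewrite F1. simpl. rewrite Hr. field_simplify_eq; try lra. nra.
  - rewrite F_rec, plus_INR, (IH (S n)) by lia. rewrite (IH n) by lia.
    replace (S (S n) + 2)%nat with (S (S (n + 2))) by lia.
    replace (S n + 2)%nat with (S (n + 2)) by lia.
    simpl pow. rewrite Hr.
    assert (0 < phi ^ n) by (apply pow_lt; lra).
    assert (0 < phi ^ (n+2)) by (apply pow_lt; lra).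
    field_simplify_eq; try (split; lra) ; try lra.
    assert (E4 : phi^4 = phi^3 + phi^2) by (replace (phi^4) with ((phi*phi)*(phi*phi)) by ring; replace (phi^3) with (phi*(phi*phi)) by ring; replace (phi^2) with (phi*phi) by ring; rewrite Hs; ring).
    assert (E2 : phi^2 = phi + 1) by (rewrite <- Hs; ring).
    rewrite E4, E2. ring.
Qed.

Lemma Fbound n : Rabs (INR (F n) - c0 * phi ^ n) <= 1.
Proof.
  rewrite binet. pose proof c0_pos. pose proof c0_le1. pose proof phi_gt1.
  replace (c0 * (phi ^ n + (-1) ^ n / phi ^ (n + 2)) - c0 * phi ^ n) with (c0 * ((-1) ^ n / phi ^ (n + 2))) by ring.
  rewrite Rabs_mult, Rabs_right by lra. unfold Rdiv. rewrite Rabs_mult, pow_1_abs, Rmult_1_l.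
  assert (1 <= phi ^ (n + 2)) by (apply pow_R1_Rle; lra).
  rewrite Rabs_right. 2: { apply Rle_ge, Rlt_le, Rinv_0_lt_compat; lra. }
  assert (/ phi ^ (n + 2) <= 1). { rewrite <- Rinv_1. apply Rinv_le_contravar; lra. }
  assert (0 < / phi ^ (n + 2)) by (apply Rinv_0_lt_compat; lra). nra.
Qed.

Lemma dotw_from_S i c : dotw_from (S i) c = omega * dotw_from i c.
Proof.
  revert i; induction c as [|a c IH]; intros i; simpl. ring.
  rewrite IH. destruct a; ring.
Qed.

Lemma dotw_cons a c : dotw (a :: c) = (if a then 1 else 0) + omega * dotw c.
Proof. unfold dotw. simpl. rewrite dotw_from_S. destruct a; ring. Qed.

Lemma Pv_cons a c r : Pv (a :: c) r = ((if a then F (S (length c + r)) else 0) + Pv c r)%nat.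
Proof.
  unfold Pv. change ((a :: c) ++ repeat false r) with (a :: (c ++ repeat false r)).
  destruct a. rewrite valF_t, length_app, repeat_length. reflexivity. rewrite valF_f. reflexivity.
Qed.

Lemma approx c r : Rabs (INR (Pv c r) - c0 * phi ^ (length c + r) * dotw c) <= INR (length c).
Proof.
  induction c as [|a c IH].
  - unfold Pv, dotw. simpl dotw_from. rewrite app_nil_l, valF_zeros. simpl. replace (0 - c0 * phi ^ r * 0) with 0 by ring. rewrite Rabs_R0. lra.
  - rewrite Pv_cons, plus_INR, dotw_cons. cbn [length]. rewrite S_INR.
    replace (S (length c) + r)%nat with (S (length c + r)) by lia.
    assert (E : c0 * phi ^ S (length c + r) * ((if a then 1 else 0) + omega * dotw c)
      = (if a then c0 * phi ^ S (length c + r) else 0) + c0 * phi ^ (length c + r) * dotw c).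
    { simpl pow. pose proof omega_phi. destruct a.
      - replace (c0 * (phi * phi ^ (length c + r)) * (1 + omega * dotw c)) with
          (c0 * phi ^ (length c + r) * phi + c0 * phi ^ (length c + r) * dotw c * (omega * phi)) by ring.
        rewrite H. ring.
      - replace (c0 * (phi * phi ^ (length c + r)) * (0 + omega * dotw c)) with
          (c0 * phi ^ (length c + r) * dotw c * (omega * phi)) by ring. rewrite H. ring. }
    rewrite E. destruct a.
    + pose proof (Fbound (S (length c + r))).
      replace (INR (F (S (length c + r))) + INR (Pv c r) -
        (c0 * phi ^ S (length c + r) + c0 * phi ^ (length c + r) * dotw c)) with
        ((INR (F (S (length c + r))) - c0 * phi ^ S (length c + r)) + (INR (Pv c r) - c0 * phi ^ (length c + r) * dotw c)) by ring.
      eapply Rle_trans. apply Rabs_triang. lra.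
    + simpl INR. replace (0 + INR (Pv c r) - (0 + c0 * phi ^ (length c + r) * dotw c)) with
        (INR (Pv c r) - c0 * phi ^ (length c + r) * dotw c) by ring. lra.
Qed.

Lemma dotw_nonneg c : 0 <= dotw c.
Proof.
  induction c as [|a c IH]. unfold dotw; simpl; lra.
  rewrite dotw_cons. rewrite omega_eq. pose proof phi_gt1. destruct a; nra.
Qed.

Lemma dotw_ge1 c : hd false c = true -> 1 <= dotw c.
Proof.
  destruct c as [|a c]; simpl; intros H; try discriminate. subst a.
  rewrite dotw_cons. rewrite omega_eq. pose proof phi_gt1. pose proof (dotw_nonneg c). nra.
Qed.

Lemma dotw_le_phi c : no_adj c -> dotw c <= phi.
Proof.
  pose proof phi_gt1. pose proof phi_sq. pose proof omega_eq.
  induction c as [c IH] using (well_founded_induction (Wf_nat.well_founded_ltof _ (@length bool))); unfold Wf_nat.ltof in IH.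
  intros Hn. destruct c as [|a c]. unfold dotw; simpl; lra.
  rewrite dotw_cons. destruct a.
  - destruct c as [|a' c']. unfold dotw; simpl; lra.
    destruct a'. simpl in Hn; tauto.
    rewrite dotw_cons. 
    assert (dotw c' <= phi) by (apply IH; [simpl; lia| apply (no_adj_tl _ _ (no_adj_tl _ _ Hn))]).
    assert (Ho : 0 <= omega) by lra.
    assert (omega * omega * dotw c' <= omega * omega * phi) by (apply Rmult_le_compat_l; nra).
    assert (omega * omega * phi = omega) by (rewrite H1; nra). nra.
  - assert (dotw c <= phi) by (apply IH; [simpl; lia| apply (no_adj_tl _ _ Hn)]).
    assert (Ho : 0 <= omega) by lra.
    assert (omega * dotw c <= omega * phi) by (apply Rmult_le_compat_l; nra).
    assert (omega * phi = 1) by (rewrite H1; nra). nra.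
Qed.

Lemma dotw_last_block s : (2 <= s)%nat -> dotw (last_block s) = phi.
Proof.
  intros Hs. pose proof phi_sq. pose proof omega_eq. pose proof phi_gt1.
  assert (Hb : forall j tl, dotw (concat (repeat [true; false] j) ++ true :: true :: tl) = phi + omega ^ (2 * j + 2) * dotw tl).
  { induction j; intros tl.
    - simpl concat. rewrite app_nil_l. rewrite !dotw_cons. simpl pow. rewrite H0. nra.
    - cbn [repeat concat]. change (([true; false] ++ concat (repeat [true; false] j)) ++ true :: true :: tl)
        with (true :: false :: (concat (repeat [true; false] j) ++ true :: true :: tl)).
      rewrite !dotw_cons, IHj. replace (2 * S j + 2)%nat with (S (S (2 * j + 2))) by lia.
      simpl pow. rewrite H0. nra. }
  unfold last_block. destruct (Nat.even s).
  - rewrite (Hb _ []). replace (dotw []) with 0 by reflexivity. ring.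
  - rewrite (Hb _ [false]). replace (dotw [false]) with 0 by (unfold dotw; simpl; ring). ring.
Qed.


Lemma FF_cont : continuity FF.
Proof.
  unfold FF, Rpower. reg.
Qed.

Lemma lnphi_pos : 0 < ln phi.
Proof. rewrite <- ln_1. apply ln_increasing. lra. apply phi_gt1. Qed.

Lemma Rpower_phi_ge1 x : 0 <= x -> 1 <= Rpower phi x.
Proof.
  intros Hx. unfold Rpower. pose proof lnphi_pos. pose proof (exp_ineq1_le (x * ln phi)). nra.
Qed.

Lemma Rpower_phi_ge x : 0 <= x -> 1 + x * ln phi <= Rpower phi x.
Proof. intros Hx. unfold Rpower. apply exp_ineq1_le. Qed.

Lemma FF_decomp x : 0 <= x -> exists e, Rabs e <= 1 /\ FF x = c0 * (Rpower phi x + e).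
Proof.
  intros Hx. exists (Rpower phi (- x) * cos (PI * x) * Rpower phi (-2)).
  split; [|reflexivity].
  replace (Rpower phi (-2)) with (/ Rpower phi 2) by (rewrite <- Rpower_Ropp; f_equal; ring).
  rewrite !Rabs_mult. rewrite !Rpower_Ropp.
  pose proof (Rpower_phi_ge1 x Hx). pose proof (Rpower_phi_ge1 2 ltac:(lra)).
  assert (A1 : Rabs (/ Rpower phi x) <= 1).
  { rewrite Rabs_right. rewrite <- Rinv_1. apply Rinv_le_contravar; lra.
    apply Rle_ge, Rlt_le, Rinv_0_lt_compat; lra. }
  assert (A2 : Rabs (/ Rpower phi 2) <= 1).
  { rewrite Rabs_right. rewrite <- Rinv_1. apply Rinv_le_contravar; lra.
    apply Rle_ge, Rlt_le, Rinv_0_lt_compat; lra. }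
  assert (A3 : Rabs (cos (PI * x)) <= 1) by (apply Rabs_le; apply COS_bound).
  pose proof (Rabs_pos (/ Rpower phi x)). pose proof (Rabs_pos (cos (PI * x))).
  pose proof (Rabs_pos (/ Rpower phi 2)).
  assert (Rabs (/ Rpower phi x) * Rabs (cos (PI * x)) <= 1) by nra. assert (0 <= Rabs (/ Rpower phi x) * Rabs (cos (PI * x))) by (apply Rmult_le_pos; auto). nra.
Qed.

Lemma FF_1 : FF 1 = 1.
Proof.
  pose proof phi_gt1 as Hp.
  assert (R2 : Rpower phi (-2) = / (phi ^ 2)).
  { rewrite <- Rpower_pow by lra. rewrite <- Rpower_Ropp. f_equal. }
  unfold FF. rewrite R2, Rmult_1_r, cos_PI. rewrite Rpower_Ropp, Rpower_1 by lra.
  pose proof (binet 1) as B. rewrite F1 in B. simpl INR in B. unfold c0, r5 in B.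
  simpl in B. simpl. etransitivity; [|symmetry; exact B]. field. split; [lra|]. pose proof r5_bounds. unfold r5 in H. lra.
Qed.

Lemma FF_exists y : 1 <= y -> exists x, 1 <= x /\ FF x = y.
Proof.
  intros Hy. pose proof c0_pos. pose proof lnphi_pos.
  assert (Hyc : 0 <= y / c0).
  { unfold Rdiv; apply Rmult_le_pos; [lra| left; apply Rinv_0_lt_compat; lra]. }
  set (X := 1 + (y / c0 + 1) / ln phi).
  assert (HX0 : 0 <= (y / c0 + 1) / ln phi).
  { unfold Rdiv; apply Rmult_le_pos; [lra| left; apply Rinv_0_lt_compat; lra]. }
  assert (HX1 : 1 <= X) by (unfold X; lra).
  destruct (FF_decomp X ltac:(lra)) as [e [He HF]].
  assert (HR : y / c0 + 1 < Rpower phi X).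
  { pose proof (Rpower_phi_ge X ltac:(lra)) as H1.
    assert (E : X * ln phi = ln phi + (y / c0 + 1)) by (unfold X; field; lra).
    rewrite E in H1. lra. }
  assert (HFX : y <= FF X).
  { rewrite HF.
    assert (H1 : y / c0 <= Rpower phi X + e) by (
      destruct (Rle_lt_dec 0 e); [lra|]; rewrite Rabs_left in He by lra; lra).
    apply Rmult_le_compat_l with (r := c0) in H1; [|lra].
    replace (c0 * (y / c0)) with y in H1 by (field; lra). exact H1. }
  destruct (IVT_gen FF 1 X y FF_cont) as [x [Hx1 Hx2]].
  { rewrite FF_1. rewrite Rmin_left by lra. rewrite Rmax_right by lra. lra. }
  exists x. split; auto. rewrite Rmin_left in Hx1 by lra. lra.
Qed.

Lemma FFinv_spec y : 1 <= y -> 1 <= FFinv y /\ FF (FFinv y) = y.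
Proof.
  intros Hy. unfold FFinv. apply epsilon_spec. apply FF_exists; auto.
Qed.


Lemma ln_le_sub1 u : 0 < u -> ln u <= u - 1.
Proof. intros H. pose proof (exp_ineq1_le (ln u)). rewrite exp_ln in H0; lra. Qed.

Lemma LN u : 1/2 <= u -> Rabs (ln u) <= 2 * Rabs (u - 1).
Proof.
  intros H. pose proof (ln_le_sub1 u ltac:(lra)).
  pose proof (ln_le_sub1 (/ u) ltac:(apply Rinv_0_lt_compat; lra)).
  rewrite ln_Rinv in H1 by lra.
  assert (E : / u - 1 = (1 - u) / u) by (field; lra).
  rewrite E in H1.
  destruct (Rle_dec 1 u).
  - assert ((1 - u) / u <= 0). { unfold Rdiv. assert (0 < / u) by (apply Rinv_0_lt_compat; lra). nra. }
    assert (0 <= ln u) by lra.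
    rewrite Rabs_right by lra. rewrite Rabs_right by lra. lra.
  - assert ((1 - u) / u <= 2 * (1 - u)).
    { apply Rmult_le_reg_r with u. lra. unfold Rdiv. rewrite Rmult_assoc, Rinv_l by lra. nra. }
    assert (ln u <= 0) by lra.
    rewrite Rabs_left1 by lra. rewrite Rabs_left1 by lra. lra.
Qed.

Lemma Glem Q E t : 0 < Q -> Rabs E <= t * Q -> 0 <= t <= 1/2 ->
  0 < Q + E /\ Rabs (ln (Q + E) - ln Q) <= 2 * t.
Proof.
  intros HQ HE Ht.
  assert (HE2 : - (t * Q) <= E <= t * Q) by
    (destruct (Rle_dec 0 E); [rewrite Rabs_right in HE by lra|rewrite Rabs_left in HE by lra]; lra).
  assert (Hp : 0 < Q + E) by nra.
  split; auto.
  assert (Eq : ln (Q + E) - ln Q = ln ((Q + E) / Q)).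
  { unfold Rdiv. rewrite ln_mult, ln_Rinv; try lra. apply Rinv_0_lt_compat; lra. }
  rewrite Eq.
  assert (Eu : (Q + E) / Q = 1 + E / Q) by (field; lra).
  assert (HEQ : Rabs (E / Q) <= t).
  { unfold Rdiv. rewrite Rabs_mult, Rabs_inv, (Rabs_right Q) by lra.
    apply Rmult_le_reg_r with Q. lra. rewrite Rmult_assoc, Rinv_l by lra. lra. }
  eapply Rle_trans. apply LN.
  rewrite Eu. destruct (Rle_dec 0 (E/Q)); [rewrite Rabs_right in HEQ by lra|rewrite Rabs_left in HEQ by lra]; lra.
  rewrite Eu. replace (1 + E / Q - 1) with (E / Q) by ring. lra.
Qed.

Lemma T1 eps : 0 < eps -> exists Y, 1 <= Y /\ forall y x, Y <= y -> 1 <= x -> FF x = y ->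
  Rabs (x - (log_phi y - log_phi c0)) < eps.
Proof.
  intros He. pose proof lnphi_pos as Hl. pose proof c0_pos. pose proof c0_le1.
  set (t := Rmin (1/2) (eps * ln phi / 4)).
  assert (Ht0 : 0 < t). { unfold t. apply Rmin_glb_lt. lra. assert (0 < eps * ln phi) by nra. lra. }
  assert (Ht1 : t <= 1/2) by (unfold t; apply Rmin_l).
  assert (Ht2 : t <= eps * ln phi / 4) by (unfold t; apply Rmin_r).
  exists (Rmax 1 (c0 / t)). split. apply Rmax_l.
  intros y x Hy Hx HF.
  assert (Hy1 : 1 <= y) by (eapply Rle_trans; [apply Rmax_l|exact Hy]).
  assert (Hy2 : c0 / t <= y) by (eapply Rle_trans; [apply Rmax_r|exact Hy]).
  destruct (FF_decomp x ltac:(lra)) as [e [He1 HF2]].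
  assert (Hc : c0 * Rpower phi x = y + (- (c0 * e))) by (rewrite <- HF, HF2; ring).
  destruct (Glem y (- (c0 * e)) t ltac:(lra)) as [_ G].
  { rewrite Rabs_Ropp, Rabs_mult, Rabs_right by lra.
    apply Rmult_le_reg_r with (/ t). apply Rinv_0_lt_compat; lra.
    assert (c0 * Rabs e <= c0) by nra.
    replace (t * y * / t) with y by (field; lra). unfold Rdiv in Hy2. 
    assert (c0 * Rabs e * / t <= c0 * / t). { apply Rmult_le_compat_r. left; apply Rinv_0_lt_compat; lra. lra. }
    lra. }
  { lra. }
  rewrite <- Hc in G. rewrite ln_mult in G by (try lra; unfold Rpower; apply exp_pos).
  rewrite ln_Rpower in G.
  unfold log_phi.
  replace (x - (ln y / ln phi - ln c0 / ln phi)) with ((ln c0 + x * ln phi - ln y) / ln phi) by (field; lra).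
  unfold Rdiv. rewrite Rabs_mult, Rabs_inv, (Rabs_right (ln phi)) by lra.
  apply Rmult_lt_reg_r with (ln phi). lra. rewrite Rmult_assoc, Rinv_l by lra. lra.
Qed.

Lemma bernoulli n : 1 + INR n * (phi - 1) <= phi ^ n.
Proof.
  pose proof phi_gt1. induction n. simpl. lra.
  rewrite S_INR. simpl pow. assert (0 <= INR n) by apply pos_INR. assert (0 <= (phi - 1) * (phi ^ n - (1 + INR n * (phi - 1)))) by (apply Rmult_le_pos; lra). assert (0 <= INR n * ((phi - 1) * (phi - 1))) by (apply Rmult_le_pos; nra). nra.
Qed.

Lemma T2 c : 1 <= dotw c -> forall eps, 0 < eps -> exists R0, forall r, (R0 <= r)%nat ->
  0 < INR (Pv c r) /\
  Rabs (log_phi (INR (Pv c r)) - (INR (length c + r) + log_phi c0 + log_phi (dotw c))) < eps.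
Proof.
  intros Hd eps He. pose proof lnphi_pos as Hl. pose proof c0_pos. pose proof phi_gt1.
  set (t := Rmin (1/2) (eps * ln phi / 4)).
  assert (Ht0 : 0 < t). { unfold t. apply Rmin_glb_lt. lra. assert (0 < eps * ln phi) by nra. lra. }
  assert (Ht1 : t <= 1/2) by (unfold t; apply Rmin_l).
  assert (Ht2 : t <= eps * ln phi / 4) by (unfold t; apply Rmin_r).
  set (s := length c).
  destruct (INR_unbounded (INR s / (t * c0 * (phi - 1)))) as [R0 HR0].
  exists R0. intros r Hr.
  set (n := (s + r)%nat).
  set (Q := c0 * phi ^ n * dotw c).
  assert (Hpn : 1 + INR n * (phi - 1) <= phi ^ n) by apply bernoulli.
  assert (HnR : INR R0 <= INR n) by (apply le_INR; unfold n; lia).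
  assert (HQ0 : 0 < Q). { unfold Q. apply Rmul_gt_0_compat || idtac.
    assert (0 < phi ^ n) by (apply pow_lt; lra). 
    assert (0 < c0 * phi ^ n) by nra. nra. }
  assert (HsQ : INR s <= t * Q).
  { assert (Hpos : 0 < t * c0 * (phi - 1)) by (assert (0 < t * c0) by nra; nra).
    assert (INR s <= INR R0 * (t * c0 * (phi - 1))).
    { apply Rmult_lt_compat_r with (r := t * c0 * (phi - 1)) in HR0; [|lra].
      unfold Rdiv in HR0. rewrite Rmult_assoc, Rinv_l in HR0 by lra. lra. }
    assert (INR R0 * (t * c0 * (phi - 1)) <= t * c0 * phi ^ n).
    { assert (INR R0 * (phi - 1) <= phi ^ n) by nra.
      assert (0 < t * c0) by nra. nra. }
    unfold Q. assert (0 < t * c0 * phi ^ n). { assert (0 < phi ^ n) by (apply pow_lt; lra). assert (0 < t * c0) by nra. nra. }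
    nra. }
  pose proof (approx c r) as Ha. fold s in Ha. fold n in Ha. fold Q in Ha.
  destruct (Glem Q (INR (Pv c r) - Q) t HQ0 ltac:(lra) ltac:(lra)) as [G1 G2].
  replace (Q + (INR (Pv c r) - Q)) with (INR (Pv c r)) in G1, G2 by ring.
  split; auto.
  assert (EQ : ln Q = ln c0 + INR n * ln phi + ln (dotw c)).
  { unfold Q. rewrite !ln_mult; try lra. rewrite ln_pow by lra. ring.
    apply pow_lt; lra. assert (0 < phi ^ n) by (apply pow_lt; lra). nra. }
  rewrite EQ in G2. unfold log_phi.
  replace (ln (INR (Pv c r)) / ln phi - (INR n + ln c0 / ln phi + ln (dotw c) / ln phi))
    with ((ln (INR (Pv c r)) - (ln c0 + INR n * ln phi + ln (dotw c))) / ln phi) by (field; lra).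
  unfold Rdiv. rewrite Rabs_mult, Rabs_inv, (Rabs_right (ln phi)) by lra.
  apply Rmult_lt_reg_r with (ln phi). lra. rewrite Rmult_assoc, Rinv_l by lra. lra.
Qed.


Lemma cnt_S P n : count_upto P (S n) = ((if excluded_middle_informative (P (S n)) then 1 else 0) + count_upto P n)%nat.
Proof. reflexivity. Qed.

Lemma cnt_le P n : (count_upto P n <= n)%nat.
Proof. induction n. simpl; lia. rewrite cnt_S. destruct excluded_middle_informative; lia. Qed.

Lemma cnt_mono P Q n : (forall k, P k -> Q k) -> (count_upto P n <= count_upto Q n)%nat.
Proof.
  intros H. induction n. simpl; lia. rewrite !cnt_S.
  destruct (excluded_middle_informative (P (S n))), (excluded_middle_informative (Q (S n))); try lia.
  exfalso; auto.
Qed.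

Lemma cnt_ext P Q n : (forall k, P k <-> Q k) -> count_upto P n = count_upto Q n.
Proof.
  intros H. apply Nat.le_antisymm; apply cnt_mono; firstorder.
Qed.

Lemma cnt_ev P Q k0 n : (forall k, (k0 <= k)%nat -> P k -> Q k) ->
  (count_upto P n <= count_upto Q n + k0)%nat.
Proof.
  intros H. induction n. simpl; lia. rewrite !cnt_S.
  destruct (excluded_middle_informative (P (S n))), (excluded_middle_informative (Q (S n))); try lia.
  destruct (Nat.le_gt_cases k0 (S n)). exfalso; auto.
  pose proof (cnt_le P n). pose proof (cnt_le Q n). lia.
Qed.

Lemma cnt_or P Q n : (count_upto (fun k => P k \/ Q k) n <= count_upto P n + count_upto Q n)%nat.
Proof.
  induction n. simpl; lia. rewrite !cnt_S.
  destruct (excluded_middle_informative (P (S n) \/ Q (S n))), (excluded_middle_informative (P (S n))),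
    (excluded_middle_informative (Q (S n))); try lia. tauto.
Qed.

Lemma cnt_split P Q n : count_upto P n =
  (count_upto (fun k => P k /\ Q k) n + count_upto (fun k => P k /\ ~ Q k) n)%nat.
Proof.
  induction n. simpl; lia. rewrite !cnt_S.
  destruct (excluded_middle_informative (P (S n))), (excluded_middle_informative (P (S n) /\ Q (S n))),
    (excluded_middle_informative (P (S n) /\ ~ Q (S n))); try lia; tauto.
Qed.

Lemma cnt_all P n : (forall k, P k) -> count_upto P n = n.
Proof. intros H. induction n. reflexivity. rewrite cnt_S. destruct excluded_middle_informative. lia. exfalso; auto. Qed.

Lemma cnt_none P n : (forall k, ~ P k) -> count_upto P n = 0%nat.
Proof. intros H. induction n. reflexivity. rewrite cnt_S. destruct excluded_middle_informative. exfalso; exact (H _ p). lia. Qed.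

Definition clip (a : R) := Rmax 0 (Rmin a 1).

Lemma f_range (x : nat -> R) k : 0 <= frac_part (x k) < 1.
Proof. pose proof (base_fp (x k)). lra. Qed.

Lemma LA (x : nat -> R) (Heq : equidistributed x) a :
  Un_cv (fun n => INR (count_upto (fun k => frac_part (x k) <= a) n) / INR n) (clip a).
Proof.
  set (f k := frac_part (x k)).
  destruct (Rlt_dec a 0) as [Ha|Ha].
  - unfold clip. rewrite Rmin_left, Rmax_left by lra.
    intros e He. exists 0%nat. intros n _. rewrite cnt_none.
    simpl INR. unfold Rdiv. rewrite Rmult_0_l. unfold R_dist. rewrite Rminus_0_r, Rabs_R0. lra.
    intros k Hk. pose proof (f_range x k). lra.
  - destruct (Rle_dec 1 a) as [Ha1|Ha1].
    + unfold clip. rewrite Rmin_right, Rmax_right by lra.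
      intros e He. exists 1%nat. intros n Hn. rewrite cnt_all.
      unfold R_dist. assert (0 < INR n) by (apply lt_0_INR; lia).
      replace (INR n / INR n - 1) with 0 by (field; lra). rewrite Rabs_R0. lra.
      intros k. pose proof (f_range x k). lra.
    + unfold clip. rewrite Rmin_left, Rmax_right by lra.
      apply is_lim_seq_Reals. apply Heq. lra.
Qed.

Lemma LB (x : nat -> R) (Heq : equidistributed x) a :
  Un_cv (fun n => INR (count_upto (fun k => frac_part (x k) < a) n) / INR n) (clip a).
Proof.
  destruct (Rle_dec a 0) as [Ha|Ha].
  - unfold clip. rewrite Rmin_left, Rmax_left by lra.
    intros e He. exists 0%nat. intros n _. rewrite cnt_none.
    simpl INR. unfold Rdiv. rewrite Rmult_0_l. unfold R_dist. rewrite Rminus_0_r, Rabs_R0. lra.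
    intros k Hk. pose proof (f_range x k). lra.
  - destruct (Rlt_dec 1 a) as [Ha1|Ha1].
    + unfold clip. rewrite Rmin_right, Rmax_right by lra.
      intros e He. exists 1%nat. intros n Hn. rewrite cnt_all.
      unfold R_dist. assert (0 < INR n) by (apply lt_0_INR; lia).
      replace (INR n / INR n - 1) with 0 by (field; lra). rewrite Rabs_R0. lra.
      intros k. pose proof (f_range x k). lra.
    + unfold clip. rewrite Rmin_left, Rmax_right by lra.
      intros e He.
      set (eta := Rmin a (e / 2)).
      assert (Heta : 0 < eta) by (unfold eta; apply Rmin_glb_lt; lra).
      assert (Heta1 : eta <= a) by (unfold eta; apply Rmin_l).
      assert (Heta2 : eta <= e / 2) by (unfold eta; apply Rmin_r).
      pose proof (LA x Heq (a - eta)) as L1. pose proof (LA x Heq a) as L2.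
      unfold clip in L1, L2. rewrite Rmin_left, Rmax_right in L1 by lra.
      rewrite Rmin_left, Rmax_right in L2 by lra.
      destruct (L1 (e / 2) ltac:(lra)) as [N1 H1].
      destruct (L2 (e / 2) ltac:(lra)) as [N2 H2].
      exists (S (N1 + N2)). intros n Hn.
      specialize (H1 n ltac:(lia)). specialize (H2 n ltac:(lia)).
      unfold R_dist in *.
      assert (Hn0 : 0 < INR n) by (apply lt_0_INR; lia).
      assert (M1 : INR (count_upto (fun k => frac_part (x k) <= a - eta) n) <= INR (count_upto (fun k => frac_part (x k) < a) n)).
      { apply le_INR, cnt_mono. intros k Hk. lra. }
      assert (M2 : INR (count_upto (fun k => frac_part (x k) < a) n) <= INR (count_upto (fun k => frac_part (x k) <= a) n)).
      { apply le_INR, cnt_mono. intros k Hk. lra. }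
      set (u1 := INR (count_upto (fun k => frac_part (x k) <= a - eta) n)) in *.
      set (u2 := INR (count_upto (fun k => frac_part (x k) < a) n)) in *.
      set (u3 := INR (count_upto (fun k => frac_part (x k) <= a) n)) in *.
      assert (D1 : u1 / INR n <= u2 / INR n).
      { unfold Rdiv. apply Rmult_le_compat_r. left; apply Rinv_0_lt_compat; lra. lra. }
      assert (D2 : u2 / INR n <= u3 / INR n).
      { unfold Rdiv. apply Rmult_le_compat_r. left; apply Rinv_0_lt_compat; lra. lra. }
      apply Rabs_def2 in H1. apply Rabs_def2 in H2. apply Rabs_def1; lra.
Qed.



Lemma FR x (M : nat) a c e : 0 <= a -> c <= 1 -> 0 < e ->
  a - 2 * e < x - INR M < c + 2 * e ->
  (a - 2 * e <= frac_part x <= c + 2 * e) \/ ~ (frac_part x < 1 - 2 * e) \/ frac_part x < 2 * e.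
Proof.
  intros Ha Hc He Hx.
  destruct (Rlt_dec (frac_part x) (2 * e)); [right; right; auto|].
  destruct (Rlt_dec (frac_part x) (1 - 2 * e)) as [Hf|Hf]; [|right; left; auto].
  left. unfold frac_part in *.
  set (N := Int_part x) in *.
  set (z := (N - Z.of_nat M)%Z).
  assert (Hz : IZR z = IZR N - INR M) by (unfold z; rewrite minus_IZR, INR_IZR_INZ; ring).
  destruct (Z_lt_le_dec z 0) as [Hz1|Hz1].
  - assert (IZR z <= -1) by (apply IZR_le; lia). lra.
  - destruct (Z_lt_le_dec 0 z) as [Hz2|Hz2].
    + assert (1 <= IZR z) by (apply IZR_le; lia). lra.
    + assert (z = 0%Z) by lia. rewrite H in Hz. simpl in Hz. lra.
Qed.

Lemma log_phi_mono u v : 0 < u -> u <= v -> log_phi u <= log_phi v.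
Proof.
  intros Hu Huv. unfold log_phi, Rdiv. apply Rmult_le_compat_r.
  left; apply Rinv_0_lt_compat, lnphi_pos. destruct Huv as [Hlt|Heq]; [left; apply ln_increasing; auto| right; subst; auto].
Qed.

Lemma log_phi_lt_inv u v : 0 < u -> 0 < v -> log_phi u < log_phi v -> u < v.
Proof.
  intros Hu Hv H. apply ln_lt_inv; auto. unfold log_phi, Rdiv in H.
  apply Rmult_lt_reg_r with (/ ln phi); auto. apply Rinv_0_lt_compat, lnphi_pos.
Qed.

Lemma log_phi_pow n : log_phi (phi ^ n) = INR n.
Proof.
  unfold log_phi. pose proof phi_gt1. pose proof lnphi_pos. rewrite ln_pow by lra. field. lra.
Qed.

Lemma K_ge (K : nat -> nat) (Kpos : forall n, (1 <= n)%nat -> (0 < K n)%nat)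
  (Kinc : forall n, (1 <= n)%nat -> (K n < K (S n))%nat) : forall k, (1 <= k)%nat -> (k <= K k)%nat.
Proof.
  induction k; intros H. lia. destruct k. specialize (Kpos 1%nat (le_n 1)). lia.
  specialize (IHk ltac:(lia)). specialize (Kinc (S k) ltac:(lia)). lia.
Qed.

Lemma log_phi_lt u v : 0 < u -> u < v -> log_phi u < log_phi v.
Proof.
  intros Hu Huv. unfold log_phi, Rdiv. apply Rmult_lt_compat_r.
  apply Rinv_0_lt_compat, lnphi_pos. apply ln_increasing; auto.
Qed.

Lemma bt_props s b bt : (2 <= s)%nat -> inFs s b -> is_tilde s b bt ->
  length bt = s /\ 1 <= dotw bt <= phi.
Proof.
  intros Hs Hb Ht. destruct (Pv_bt_le s b bt 0 Hs Hb Ht) as [H1 [H2 _]].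
  split; auto. split. apply dotw_ge1; auto.
  destruct Ht as [[Hc _]|[_ Hc]].
  - destruct (inFs_props s bt ltac:(lia) Hc) as [_ [Hn _]]. apply dotw_le_phi; auto.
  - subst bt. rewrite dotw_last_block; auto. lra.
Qed.

Lemma fwd_ev K (Kpos : forall n, (1 <= n)%nat -> (0 < K n)%nat)
  (Kinc : forall n, (1 <= n)%nat -> (K n < K (S n))%nat) s b bt :
  (2 <= s)%nat -> inFs s b -> is_tilde s b bt ->
  forall e, 0 < e -> exists k0, forall k, (k0 <= k)%nat -> LB_is s (K k) b ->
  (log_phi (dotw b) - 2 * e <= frac_part (FFinv (INR (K k))) <= log_phi (dotw bt) + 2 * e) \/
  ~ (frac_part (FFinv (INR (K k))) < 1 - 2 * e) \/ frac_part (FFinv (INR (K k))) < 2 * e.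
Proof.
  intros Hs Hb Ht e He.
  destruct (inFs_props s b ltac:(lia) Hb) as [Hbl [Hbn Hbh]].
  destruct (bt_props s b bt Hs Hb Ht) as [Htl [Hd1 Hd2]].
  pose proof (dotw_ge1 b Hbh) as Hdb.
  destruct (T1 e He) as [Y [HY1 HT1]].
  destruct (T2 b Hdb e He) as [Rb HRb].
  destruct (T2 bt Hd1 e He) as [Rt HRt].
  set (R0 := (Rb + Rt)%nat).
  destruct (INR_unbounded Y) as [kY HkY].
  exists (kY + F (S (s + R0)) + 1)%nat. intros k Hk HL.
  pose proof (K_ge K Kpos Kinc k ltac:(lia)) as HKk.
  destruct (LB_fwd s b bt (K k) Hs Hb Ht HL) as [r [Hr1 Hr2]].
  assert (HrR : (R0 <= r)%nat).
  { destruct (Nat.le_gt_cases R0 r); auto. exfalso.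
    destruct (Pv_bt_le s b bt r Hs Hb Ht) as [_ [_ HF]].
    pose proof (F_mono_le (S (s + r)) (S (s + R0)) ltac:(lia)). lia. }
  set (y := INR (K k)).
  assert (Hy1 : 1 <= y) by (unfold y; replace 1 with (INR 1) by reflexivity; apply le_INR; lia).
  assert (HyY : Y <= y).
  { unfold y. assert (INR kY <= INR (K k)) by (apply le_INR; lia). lra. }
  destruct (FFinv_spec y Hy1) as [Hx1 Hx2].
  set (x := FFinv y) in *.
  specialize (HT1 y x HyY Hx1 Hx2).
  destruct (HRb r ltac:(unfold R0 in HrR; lia)) as [Pb0 Pb1].
  destruct (HRt r ltac:(unfold R0 in HrR; lia)) as [Pt0 Pt1].
  rewrite Hbl in Pb1. rewrite Htl in Pt1.
  assert (L1 : log_phi (INR (Pv b r)) <= log_phi y) by (apply log_phi_mono; auto; apply le_INR; lia).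
  assert (L2 : log_phi y < log_phi (INR (Pv bt r))) by (apply log_phi_lt; [lra| apply lt_INR; lia]).
  assert (H0a : 0 <= log_phi (dotw b)).
  { replace 0 with (log_phi (phi ^ 0)) by (rewrite log_phi_pow; reflexivity). apply log_phi_mono. simpl; lra. simpl; lra. }
  assert (H1b : log_phi (dotw bt) <= 1).
  { replace 1 with (log_phi (phi ^ 1)) by (rewrite log_phi_pow; reflexivity).
    apply log_phi_mono. lra. simpl. lra. }
  apply (FR x (s + r) (log_phi (dotw b)) (log_phi (dotw bt)) e H0a H1b He).
  apply Rabs_def2 in HT1. apply Rabs_def2 in Pb1. apply Rabs_def2 in Pt1.
  split; lra.
Qed.

Lemma bwd_ev K (Kpos : forall n, (1 <= n)%nat -> (0 < K n)%nat)
  (Kinc : forall n, (1 <= n)%nat -> (K n < K (S n))%nat) s b bt :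
  (2 <= s)%nat -> inFs s b -> is_tilde s b bt ->
  forall e, 0 < e -> exists k0, forall k, (k0 <= k)%nat ->
  (log_phi (dotw b) + 2 * e <= frac_part (FFinv (INR (K k))) <= log_phi (dotw bt) - 2 * e) ->
  LB_is s (K k) b.
Proof.
  intros Hs Hb Ht e He.
  destruct (inFs_props s b ltac:(lia) Hb) as [Hbl [Hbn Hbh]].
  destruct (bt_props s b bt Hs Hb Ht) as [Htl [Hd1 Hd2]].
  pose proof (dotw_ge1 b Hbh) as Hdb.
  destruct (T1 e He) as [Y [HY1 HT1]].
  destruct (T2 b Hdb e He) as [Rb HRb].
  destruct (T2 bt Hd1 e He) as [Rt HRt].
  set (R0 := (Rb + Rt)%nat).
  destruct (INR_unbounded (log_phi c0 + e + INR (s + R0) + 1)) as [n0 Hn0].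
  destruct (INR_unbounded (Rmax Y (phi ^ n0))) as [kY HkY].
  exists (kY + 1)%nat. intros k Hk Hf.
  pose proof (K_ge K Kpos Kinc k ltac:(lia)) as HKk.
  set (y := INR (K k)).
  assert (Hyk : Rmax Y (phi ^ n0) < y).
  { unfold y. assert (INR kY <= INR (K k)) by (apply le_INR; lia). lra. }
  assert (HyY : Y <= y) by (pose proof (Rmax_l Y (phi ^ n0)); lra).
  assert (Hyp : phi ^ n0 <= y) by (pose proof (Rmax_r Y (phi ^ n0)); lra).
  assert (Hy1 : 1 <= y) by lra.
  destruct (FFinv_spec y Hy1) as [Hx1 Hx2].
  set (x := FFinv y) in *.
  specialize (HT1 y x HyY Hx1 Hx2).
  assert (Hly : INR n0 <= log_phi y).
  { rewrite <- log_phi_pow. apply log_phi_mono; auto. apply pow_lt. pose proof phi_gt1; lra. }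
  apply Rabs_def2 in HT1.
  pose proof (base_Int_part x) as [Hi1 Hi2].
  set (N := Int_part x) in *.
  assert (HN : (Z.of_nat (s + R0) < N)%Z).
  { apply lt_IZR. rewrite <- INR_IZR_INZ. lra. }
  set (r := (Z.to_nat N - s)%nat).
  assert (Hsr : (s + r)%nat = Z.to_nat N) by (unfold r; lia).
  assert (HrR : (R0 <= r)%nat) by (unfold r; lia).
  assert (HM : INR (s + r) = IZR N).
  { rewrite Hsr, INR_IZR_INZ, Z2Nat.id by lia. reflexivity. }
  destruct (HRb r ltac:(unfold R0 in HrR; lia)) as [Pb0 Pb1].
  destruct (HRt r ltac:(unfold R0 in HrR; lia)) as [Pt0 Pt1].
  rewrite Hbl in Pb1. rewrite Htl in Pt1.
  apply Rabs_def2 in Pb1. apply Rabs_def2 in Pt1.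
  unfold frac_part in Hf. change (FFinv (INR (K k))) with x in Hf. change (Int_part x) with N in Hf. rewrite <- HM in Hf.
  apply (LB_bwd s b bt (K k) r Hs Hb Ht).
  split.
  - assert (INR (Pv b r) < y).
    { apply log_phi_lt_inv; auto. lra. lra. }
    apply INR_lt in H. lia.
  - assert (y < INR (Pv bt r)).
    { apply log_phi_lt_inv; auto. lra. lra. }
    apply INR_lt in H. exact H.
Qed.


Lemma alpha_le_beta s b bt : (2 <= s)%nat -> inFs s b -> is_tilde s b bt ->
  log_phi (dotw b) <= log_phi (dotw bt).
Proof.
  intros Hs Hb Ht.
  destruct (inFs_props s b ltac:(lia) Hb) as [Hbl [Hbn Hbh]].
  destruct (bt_props s b bt Hs Hb Ht) as [Htl [Hd1 Hd2]].
  pose proof (dotw_ge1 b Hbh) as Hdb.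
  apply Rnot_lt_le. intros Hlt.
  set (e := (log_phi (dotw b) - log_phi (dotw bt)) / 4).
  assert (He : 0 < e) by (unfold e; lra).
  destruct (T2 b Hdb e He) as [Rb HRb].
  destruct (T2 bt Hd1 e He) as [Rt HRt].
  set (r := (Rb + Rt)%nat).
  destruct (HRb r ltac:(unfold r; lia)) as [Pb0 Pb1].
  destruct (HRt r ltac:(unfold r; lia)) as [Pt0 Pt1].
  rewrite Hbl in Pb1. rewrite Htl in Pt1.
  assert (Hlt2 : (Pv b r < Pv bt r)%nat).
  { destruct Ht as [[Hc Hv]|[Hn Hc]].
    - destruct (inFs_props s bt ltac:(lia) Hc) as [H1 [H2 H3]].
      unfold Pv. apply cmpA; auto. congruence. apply no_adj_app_zeros; auto.
      apply no_adj_app_zeros; auto. lia.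
    - subst bt. destruct (last_block_props s r Hs) as [_ [_ H3]]. rewrite H3.
      pose proof (Pv_lt_F b r Hbn). rewrite Hbl in H. exact H. }
  assert (log_phi (INR (Pv b r)) < log_phi (INR (Pv bt r))) by (apply log_phi_lt; auto; apply lt_INR; auto).
  apply Rabs_def2 in Pb1. apply Rabs_def2 in Pt1. unfold e in *. lra.
Qed.

Lemma clip_le a : 0 <= a -> clip a <= a.
Proof. intros H. unfold clip. apply Rmax_lub. lra. apply Rmin_l. Qed.

Lemma clip_ge a : a <= 1 -> a <= clip a.
Proof. intros H. unfold clip. eapply Rle_trans; [|apply Rmax_r]. apply Rmin_glb; lra. Qed.

Lemma clip_id a : 0 <= a <= 1 -> clip a = a.
Proof. intros H. unfold clip. rewrite Rmin_left, Rmax_right by lra. reflexivity. Qed.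

Lemma ratio_eq a n : (1 <= n)%nat -> INR a = INR a / INR n * INR n.
Proof. intros H. assert (0 < INR n) by (apply lt_0_INR; lia). field. lra. Qed.

Theorem theorem4p5 (K : nat -> nat)
  (Kpos : forall n, (1 <= n)%nat -> (0 < K n)%nat)
  (Kinc : forall n, (1 <= n)%nat -> (K n < K (S n))%nat)
  (Heq : equidistributed (fun n => FFinv (INR (K n)))) :
  forall (s : nat) (b bt : list bool), (2 <= s)%nat -> inFs s b -> is_tilde s b bt ->
    is_lim_seq (fun n => INR (count_upto (fun k => LB_is s (K k) b) n) / INR n)
               (log_phi (dotw bt / dotw b)).
Proof.
  intros s b bt Hs Hb Ht.
  destruct (inFs_props s b ltac:(lia) Hb) as [Hbl [Hbn Hbh]].
  destruct (bt_props s b bt Hs Hb Ht) as [Htl [Hd1 Hd2]].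
  pose proof (dotw_ge1 b Hbh) as Hdb.
  set (al := log_phi (dotw b)). set (be := log_phi (dotw bt)).
  assert (Hlim : log_phi (dotw bt / dotw b) = be - al).
  { unfold be, al, log_phi, Rdiv. assert (0 < / dotw b) by (apply Rinv_0_lt_compat; lra). rewrite ln_mult by lra. rewrite ln_Rinv by lra.
    field. pose proof lnphi_pos; lra. }
  rewrite Hlim.
  assert (Hab : al <= be) by (apply (alpha_le_beta s b bt); auto).
  assert (H0a : 0 <= al).
  { unfold al. replace 0 with (log_phi (phi ^ 0)) by (rewrite log_phi_pow; reflexivity).
    apply log_phi_mono. simpl; lra. simpl; lra. }
  assert (H1b : be <= 1).
  { unfold be. replace 1 with (log_phi (phi ^ 1)) by (rewrite log_phi_pow; reflexivity).
    apply log_phi_mono. lra. simpl. lra. }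
  apply is_lim_seq_Reals. intros E HE.
  set (e := Rmin (E / 40) (1 / 4)).
  assert (He0 : 0 < e) by (unfold e; apply Rmin_glb_lt; lra).
  assert (He1 : e <= E / 40) by (unfold e; apply Rmin_l).
  assert (He2 : e <= 1 / 4) by (unfold e; apply Rmin_r).
  set (x := fun n => FFinv (INR (K n))).
  destruct (fwd_ev K Kpos Kinc s b bt Hs Hb Ht e He0) as [k1 Hk1].
  destruct (bwd_ev K Kpos Kinc s b bt Hs Hb Ht e He0) as [k2 Hk2].
  destruct (LA x Heq (be + 2 * e) e He0) as [N1 HN1].
  destruct (LB x Heq (al - 2 * e) e He0) as [N2 HN2].
  destruct (LB x Heq (1 - 2 * e) e He0) as [N3 HN3].
  destruct (LB x Heq (2 * e) e He0) as [N4 HN4].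
  destruct (LA x Heq (be - 2 * e) e He0) as [N5 HN5].
  destruct (LB x Heq (al + 2 * e) e He0) as [N6 HN6].
  destruct (INR_unbounded (INR (k1 + k2) / e)) as [N7 HN7].
  exists (S (N1 + N2 + N3 + N4 + N5 + N6 + N7)). intros n Hn.
  specialize (HN1 n ltac:(lia)). specialize (HN2 n ltac:(lia)). specialize (HN3 n ltac:(lia)).
  specialize (HN4 n ltac:(lia)). specialize (HN5 n ltac:(lia)). specialize (HN6 n ltac:(lia)).
  unfold R_dist in *.
  apply Rabs_def2 in HN1. apply Rabs_def2 in HN2. apply Rabs_def2 in HN3.
  apply Rabs_def2 in HN4. apply Rabs_def2 in HN5. apply Rabs_def2 in HN6.
  assert (Hw : 0 < INR n) by (apply lt_0_INR; lia).
  assert (Hk : INR (k1 + k2) <= e * INR n).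
  { assert (INR N7 <= INR n) by (apply le_INR; lia).
    apply Rmult_lt_compat_r with (r := e) in HN7; [|lra].
    unfold Rdiv in HN7. rewrite Rmult_assoc, Rinv_l in HN7 by lra. nra. }
  rewrite plus_INR in Hk. pose proof (pos_INR k1). pose proof (pos_INR k2).
  set (cL := count_upto (fun k => LB_is s (K k) b) n) in *.
  set (A1 := count_upto (fun k => frac_part (x k) <= be + 2 * e) n) in *.
  set (B1 := count_upto (fun k => frac_part (x k) < al - 2 * e) n) in *.
  set (B2 := count_upto (fun k => frac_part (x k) < 1 - 2 * e) n) in *.
  set (B3 := count_upto (fun k => frac_part (x k) < 2 * e) n) in *.
  set (A5 := count_upto (fun k => frac_part (x k) <= be - 2 * e) n) in *.
  set (B6 := count_upto (fun k => frac_part (x k) < al + 2 * e) n) in *.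
  assert (Up : (cL + B1 + B2 <= k1 + A1 + n + B3)%nat).
  { set (I1 := fun k => al - 2 * e <= frac_part (x k) <= be + 2 * e).
    set (I2 := fun k => ~ (frac_part (x k) < 1 - 2 * e)).
    set (I3 := fun k => frac_part (x k) < 2 * e).
    assert (S1 : (cL <= count_upto (fun k => I1 k \/ (I2 k \/ I3 k)) n + k1)%nat).
    { apply cnt_ev. intros k Hk0 HL. apply (Hk1 k Hk0) in HL. unfold I1, I2, I3, x. tauto. }
    assert (S2 : (count_upto (fun k => I1 k \/ (I2 k \/ I3 k)) n <=
       count_upto I1 n + (count_upto I2 n + count_upto I3 n))%nat).
    { eapply Nat.le_trans. apply cnt_or. pose proof (cnt_or I2 I3 n). lia. }
    assert (S3 : (count_upto I1 n + B1 = A1)%nat).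
    { unfold A1. rewrite (cnt_split (fun k => frac_part (x k) <= be + 2 * e) (fun k => frac_part (x k) < al - 2 * e)).
      unfold B1. rewrite Nat.add_comm. f_equal.
      - apply cnt_ext. intros k. split. intros Hq; split; lra. intros [_ Hq]; exact Hq.
      - apply cnt_ext. intros k. unfold I1. split. intros [Q1 Q2]; split; lra.
        intros [Q1 Q2]. split. lra. lra. }
    assert (S4 : (count_upto I2 n + B2 = n)%nat).
    { transitivity (count_upto (fun _ => True) n); [| apply cnt_all; auto].

      rewrite (cnt_split (fun _ => True) (fun k => frac_part (x k) < 1 - 2 * e)). unfold B2.
      rewrite Nat.add_comm. f_equal; apply cnt_ext; intros k; unfold I2; tauto. }
    unfold B3. fold I3. lia. }
  assert (Lo : (A5 <= B6 + cL + k2)%nat).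
  { set (J := fun k => al + 2 * e <= frac_part (x k) <= be - 2 * e).
    assert (S1 : (count_upto J n <= cL + k2)%nat).
    { apply cnt_ev. intros k Hk0 HJ. apply (Hk2 k Hk0). exact HJ. }
    assert (S2 : (A5 <= B6 + count_upto J n)%nat).
    { unfold A5. rewrite (cnt_split (fun k => frac_part (x k) <= be - 2 * e) (fun k => frac_part (x k) < al + 2 * e)). unfold B6.
      apply Nat.add_le_mono; apply cnt_mono; intros k; unfold J; lra. }
    lia. }
  apply le_INR in Up. apply le_INR in Lo. repeat rewrite plus_INR in Up. repeat rewrite plus_INR in Lo.
  rewrite (ratio_eq cL n), (ratio_eq A1 n), (ratio_eq B1 n), (ratio_eq B2 n), (ratio_eq B3 n) in Up by lia.
  rewrite (ratio_eq cL n), (ratio_eq A5 n), (ratio_eq B6 n) in Lo by lia.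
  set (u := INR cL / INR n) in *.
  set (a1 := INR A1 / INR n) in *. set (b1 := INR B1 / INR n) in *.
  set (b2 := INR B2 / INR n) in *. set (b3 := INR B3 / INR n) in *.
  set (a5 := INR A5 / INR n) in *. set (b6 := INR B6 / INR n) in *.
  pose proof (clip_le (be + 2 * e) ltac:(lra)).
  pose proof (clip_ge (al - 2 * e) ltac:(lra)).
  rewrite (clip_id (1 - 2 * e)) in HN3 by lra.
  pose proof (clip_le (2 * e) ltac:(lra)).
  pose proof (clip_ge (be - 2 * e) ltac:(lra)).
  pose proof (clip_le (al + 2 * e) ltac:(lra)).
  assert (Uu : u <= e + a1 + 1 + b3 - b1 - b2).
  { apply Rmult_le_reg_r with (INR n); auto. nra. }
  assert (Ll : a5 - b6 - e <= u).
  { apply Rmult_le_reg_r with (INR n); auto. nra. }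
  apply Rabs_def1; lra.
Qed.
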